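(* If $n\ge3$, then $$a_{n,i}=p(q+1)a_{n,i-1}-p^2q\,a_{n,i-2}+p^iq(q-1)a_{n-1,i-1},\qquad 3\le i\le n,$$ with $a_{n,1}=pq\sum_{j=1}^{n-1}a_{n-1,j}$ and $a_{n,2}=pa_{n,1}+p^2q(q-1)a_{n-1,1}$ for $n\ge2$, and $a_{1,1}=pq^2$.
   Context: An inversion sequence of length $n$ is a sequence $\rho=\rho_1\cdots\rho_n$ of integers with $1\le \rho_i\le i$ for all $i$; $I_{n,i}$ is the set of those of length $n$ with last letter $i$. Let $\mathrm{area}(\rho)=\rho_1+\cdots+\rho_n$ and $\mathrm{sper}(\rho)=n+\rho_1+\sum_{i=1}^{n-1}\max(\rho_{i+1}-\rho_i,0)$ (area and semi-perimeter of the associated bargraph). Define $a_{n,i}=a_{n,i}(p,q)=\sum_{\rho\in I_{n,i}}p^{\mathrm{area}(\rho)}q^{\mathrm{sper}(\rho)}$. *)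

(* Defs.v *)
From mathcomp Require Import all_boot all_order all_algebra.
Set Implicit Arguments. Unset Strict Implicit. Unset Printing Implicit Defensive.
Import GRing.Theory.
Local Open Scope ring_scope.

(* Sequences of positive integers are represented as [seq nat]; the letter
   rho_{k+1} (1-indexed, as in the paper) is [nth 0 s k]. *)

Definition is_invseq (s : seq nat) : bool :=
  all (fun k => (1 <= nth 0 s k <= k.+1)%N) (iota 0 (size s)).

Definition area (s : seq nat) : nat := sumn s.

(* sper(rho) = n + rho_1 + sum_{i=1}^{n-1} max(rho_{i+1} - rho_i, 0);
   note that truncated nat subtraction [m - n] is exactly max(m - n, 0). *)
Definition sper (s : seq nat) : nat :=
  (size s + head 0 s + \sum_(k < (size s).-1) (nth 0 s k.+1 - nth 0 s k))%N.

(* Every inversion sequence of length n has letters in 1..n, hence is the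
   image of some r : 'I_n -> 'I_(n+1); this gives a finite index set. *)
Definition seq_of (n : nat) (r : {ffun 'I_n -> 'I_n.+1}) : seq nat :=
  [seq (r k : nat) | k <- enum 'I_n].

Definition a (R : comNzRingType) (p q : R) (n i : nat) : R :=
  \sum_(r : {ffun 'I_n -> 'I_n.+1} |
          is_invseq (seq_of r) && (last 0%N (seq_of r) == i))
    p ^+ area (seq_of r) * q ^+ sper (seq_of r).

(* Main.v *)
Require Import Defs.
From mathcomp Require Import all_boot all_order all_algebra zify ring.
Import GRing.Theory.
Set Implicit Arguments. Unset Strict Implicit.
Local Open Scope ring_scope.

Fixpoint L (n : nat) : seq (seq nat) :=
  if n is m.+1 then [seq rcons t k | t <- L m, k <- iota 1 m.+1] else [:: [::]].

Lemma invseq_rcons (s : seq nat) k :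
  is_invseq (rcons s k) = is_invseq s && (1 <= k <= (size s).+1)%N.
Proof.
rewrite /is_invseq size_rcons.
have -> : iota 0 (size s).+1 = iota 0 (size s + 1) by rewrite addn1.
rewrite iotaD add0n /= all_cat /= andbT.
rewrite nth_rcons ltnn eqxx; congr (_ && _).
apply: eq_in_all => j; rewrite mem_iota add0n => /andP[_ hj].
by rewrite nth_rcons hj.
Qed.

Lemma L_S n : L n.+1 = [seq rcons t k | t <- L n, k <- iota 1 n.+1].
Proof. by []. Qed.

Lemma mem_L n s : (s \in L n) = (size s == n) && is_invseq s.
Proof.
elim: n s => [|n IH] s.
  by rewrite /= inE; case: s.
rewrite L_S; apply/allpairsPdep/idP.
  move=> [t [k [ht hk ->]]]; rewrite IH in ht; case/andP: ht => /eqP hs hi.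
  rewrite size_rcons hs eqxx invseq_rcons hi /=.
  by rewrite mem_iota add1n ltnS in hk; rewrite hs.
case/lastP: s => [|t' k]; first by rewrite /=.
rewrite size_rcons invseq_rcons eqSS => /andP[/eqP hs /andP[hi hk]].
exists t', k; split => //; first by rewrite IH hs eqxx.
by rewrite mem_iota -hs add1n ltnS.
Qed.

Lemma uniq_L n : uniq (L n).
Proof.
elim: n => [|n IH] //; rewrite L_S.
apply: allpairs_uniq_dep => //; first by move=> *; apply: iota_uniq.
move=> [x1 y1] [x2 y2] _ _ /= /eqP; rewrite eqseq_rcons => /andP[/eqP e1 /eqP e2].
by subst.
Qed.

Lemma size_seq_of n (r : {ffun 'I_n -> 'I_n.+1}) : size (seq_of r) = n.
Proof. by rewrite size_map size_enum_ord. Qed.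

Lemma nth_seq_of n (r : {ffun 'I_n -> 'I_n.+1}) (k : 'I_n) :
  nth 0%N (seq_of r) k = r k.
Proof.
by rewrite /seq_of (nth_map k) ?size_enum_ord // nth_ord_enum.
Qed.

Lemma seq_of_inj n : injective (@seq_of n).
Proof.
move=> r1 r2 e; apply/ffunP => k.
have h1 := nth_seq_of r1 k; rewrite e nth_seq_of in h1.
by apply: val_inj; rewrite /= h1.
Qed.

Lemma invseq_nth s k : is_invseq s -> (k < size s)%N -> (1 <= nth 0%N s k <= k.+1)%N.
Proof.
by move=> /allP h hk; apply: h; rewrite mem_iota.
Qed.

Lemma bridge (R : comNzRingType) n (G : seq nat -> R) :
  \sum_(r : {ffun 'I_n -> 'I_n.+1} | is_invseq (seq_of r)) G (seq_of r)
  = \sum_(s <- L n) G s.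
Proof.
rewrite -big_filter -(big_map (@seq_of n) predT G).
apply: perm_big; apply: uniq_perm.
- by rewrite map_inj_uniq ?filter_uniq ?index_enum_uniq //; apply: seq_of_inj.
- exact: uniq_L.
move=> s; rewrite mem_L; apply/mapP/idP.
  by move=> [r]; rewrite mem_filter => /andP[hP _] ->; rewrite size_seq_of eqxx hP.
move=> /andP[/eqP hs hi].
have e : seq_of [ffun k : 'I_n => (inord (nth 0%N s k) : 'I_n.+1)] = s.
  apply: (@eq_from_nth _ 0%N); first by rewrite size_seq_of hs.
  move=> k; rewrite size_seq_of => hk.
  rewrite (nth_seq_of _ (Ordinal hk)) ffunE /= inordK //.
  have := invseq_nth hi (k:=k); rewrite hs => /(_ hk) /andP[_ h].
  by rewrite ltnS (leq_trans h hk).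
exists [ffun k : 'I_n => (inord (nth 0%N s k) : 'I_n.+1)] => //.
by rewrite mem_filter mem_index_enum e hi.
Qed.

Definition w (R : comNzRingType) (p q : R) (s : seq nat) : R :=
  p ^+ area s * q ^+ sper s.

Lemma aL (R : comNzRingType) (p q : R) n i :
  a p q n i = \sum_(s <- L n | last 0%N s == i) w p q s.
Proof.
rewrite /a big_mkcondr (bridge _ (fun s => if last 0%N s == i then w p q s else 0)).
by rewrite -big_mkcond.
Qed.

Lemma sper_rcons (t : seq nat) i :
  sper (rcons t i) = (sper t + (i - last 0%N t)).+1.
Proof.
case: t => [|x t]; first by rewrite /sper /= !big_ord0; lia.
rewrite /sper size_rcons /= big_ord_recr /=.
rewrite -rcons_cons.
rewrite [nth 0%N (rcons t i) (size t)]nth_rcons ltnn eqxx.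
rewrite [nth 0%N (rcons (x :: t) i) (size t)]nth_rcons /= ltnSn.
have -> : last x t = nth 0%N (x :: t) (size t).
  by rewrite -[size t]/((size (x :: t)).-1) nth_last.
rewrite (eq_bigr (fun k : 'I_(size t) => nth 0%N t k - nth 0%N (x :: t) k)%N).
  by lia.
move=> k _; rewrite !nth_rcons /= ltn_ord -rcons_cons nth_rcons /= ltnS (ltnW (ltn_ord k)).
done.
Qed.

Lemma w_rcons (R : comNzRingType) (p q : R) t i :
  w p q (rcons t i) = p ^+ i * q ^+ (i - last 0%N t).+1 * w p q t.
Proof.
rewrite /w /area sumn_rcons sper_rcons !exprS !exprD; ring.
Qed.

Lemma last_L n t : t \in L n -> (last 0%N t < n.+1)%N.
Proof.
rewrite mem_L; case/lastP: t => [|t x] //.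
rewrite size_rcons invseq_rcons last_rcons => /andP[/eqP <- /andP[_ /andP[_ h]]].
by [].
Qed.

Lemma decomp (R : comNzRingType) (p q : R) n i : (1 <= i <= n.+1)%N ->
  a p q n.+1 i = p ^+ i * q * \sum_(t <- L n) q ^+ (i - last 0%N t) * w p q t.
Proof.
move=> hi.
rewrite aL big_mkcond L_S big_allpairs_dep /= mulr_sumr; apply: eq_bigr => t _.
rewrite (eq_bigr (fun k => if k == i then w p q (rcons t i) else 0)); last first.
  by move=> k _; rewrite last_rcons; case: eqP => // ->.
rewrite (bigD1_seq i); first last.
- exact: (iota_uniq 1 n.+1).
- by rewrite -[1%N :: iota 2 n]/(iota 1 n.+1) mem_iota add1n ltnS.
rewrite eqxx big1; last by move=> k /negPf ->.
rewrite /= addr0 w_rcons exprS; ring.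
Qed.

Lemma sum_last (R : comNzRingType) (p q : R) n (c : nat -> R) :
  \sum_(j < n.+1) c j * a p q n j = \sum_(t <- L n) c (last 0%N t) * w p q t.
Proof.
rewrite (eq_bigr (fun j : 'I_n.+1 => \sum_(t <- L n) if last 0%N t == j then c j * w p q t else 0)); last first.
  by move=> j _; rewrite aL mulr_sumr big_mkcond.
rewrite exchange_big /=; apply: eq_big_seq => t ht.
rewrite -big_mkcond /= (big_pred1 (Ordinal (last_L ht))).
  by [].
by move=> j; rewrite /= eq_sym -val_eqE.
Qed.

Lemma a0 (R : comNzRingType) (p q : R) n : (1 <= n)%N -> a p q n 0 = 0.
Proof.
move=> hn; rewrite aL big1_seq // => t /andP[/eqP h].
rewrite mem_L; case/lastP: t h => [|t x]; first by move=> _ /andP[/eqP hs]; rewrite -hs in hn.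
by rewrite last_rcons invseq_rcons => -> /andP[_ /andP[_ /andP[]]].
Qed.

Lemma w_nil (R : comNzRingType) (p q : R) : w p q [::] = 1.
Proof. by rewrite /w /area /sper /= big_ord0 mulr1. Qed.

Definition S (R : comNzRingType) (p q : R) m i :=
  \sum_(j < m.+1) q ^+ (i - j) * a p q m j.

Lemma aS (R : comNzRingType) (p q : R) m i : (1 <= i <= m.+1)%N ->
  a p q m.+1 i = p ^+ i * q * S p q m i.
Proof.
by move=> h; rewrite decomp // /S (sum_last p q m (fun j => q ^+ (i - j))).
Qed.

Lemma term (R : comNzRingType) (q x : R) k j :
  q ^+ (k.+3 - j) * x - ((q + 1) * (q ^+ (k.+2 - j) * x) - q * (q ^+ (k.+1 - j) * x))
  = if j == k.+2 then (q - 1) * x else 0.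
Proof.
case: (ltngtP j k.+2) => h.
- have -> : (k.+3 - j = (k.+1 - j).+2)%N by lia.
  have -> : (k.+2 - j = (k.+1 - j).+1)%N by lia.
  rewrite !exprS; ring.
- have -> : (k.+3 - j = 0)%N by lia.
  have -> : (k.+2 - j = 0)%N by lia.
  have -> : (k.+1 - j = 0)%N by lia.
  rewrite !expr0; ring.
- subst j; have -> : (k.+3 - k.+2 = 1)%N by lia.
  have -> : (k.+1 - k.+2 = 0)%N by lia.
  rewrite subnn !expr0 expr1; ring.
Qed.

Lemma S_rec (R : comNzRingType) (p q : R) m k : (k.+2 < m.+1)%N ->
  S p q m k.+3 = (q + 1) * S p q m k.+2 - q * S p q m k.+1 + (q - 1) * a p q m k.+2.
Proof.
move=> hk.
have key : S p q m k.+3 - ((q + 1) * S p q m k.+2 - q * S p q m k.+1)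
    = (q - 1) * a p q m k.+2.
  transitivity (\sum_(j < m.+1) if (j : nat) == k.+2 then (q - 1) * a p q m j else 0).
    rewrite /S [in LHS]mulr_sumr [in LHS]mulr_sumr -!sumrB.
    by apply: eq_bigr => j _; rewrite term.
  rewrite -big_mkcond (big_pred1 (Ordinal hk)) //.
by rewrite -key; ring.
Qed.

Lemma a00 (R : comNzRingType) (p q : R) : a p q 0 0 = 1.
Proof. by rewrite aL /= big_cons big_nil /= w_nil addr0. Qed.

Theorem proposition2p6 (R : comNzRingType) (p q : R) :
  (forall n i : nat, (3 <= n)%N -> (3 <= i <= n)%N ->
     a p q n i = p * (q + 1) * a p q n (i - 1)
                 - p ^+ 2 * q * a p q n (i - 2)
                 + p ^+ i * q * (q - 1) * a p q (n - 1) (i - 1)) /\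
  (forall n : nat, (2 <= n)%N ->
     a p q n 1 = p * q * \sum_(1 <= j < n) a p q (n - 1) j) /\
  (forall n : nat, (2 <= n)%N ->
     a p q n 2 = p * a p q n 1 + p ^+ 2 * q * (q - 1) * a p q (n - 1) 1) /\
  a p q 1 1 = p * q ^+ 2.
Proof.
split.
  move=> [|m] i // hn /andP[hi3 hin].
  case: i hi3 hin => [|[|[|k]]] // _ hin.
  rewrite !subSS !subn0.
  rewrite (aS p q (m:=m) (i:=k.+3)) // (aS p q (m:=m) (i:=k.+2)); last by lia.
  rewrite (aS p q (m:=m) (i:=k.+1)); last by lia.
  rewrite (S_rec p q hin) !exprS; ring.
split.
  move=> [|m] // hm; rewrite subSS subn0.
  rewrite (aS p q (m:=m) (i:=1)) // /S big_ord_recl a0 // mulr0 add0r.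
  rewrite big_add1 /= big_mkord expr1; congr (_ * _); apply: eq_bigr => j _.
  by rewrite /bump leq0n add1n subSS sub0n expr0 mul1r.
split.
  move=> [|m] // hm; rewrite subSS subn0.
  rewrite (aS p q (m:=m) (i:=2)); last by lia.
  rewrite (aS p q (m:=m) (i:=1)) //.
  case: m hm => [|m] // _.
  rewrite /S !big_ord_recl /= a0 // !mulr0 !add0r.
  have e : forall c, (c <= 1)%N -> \sum_(i < m) q ^+ (c.+1 - bump 0 (bump 0 i)) * a p q m.+1 (bump 0 (bump 0 i))
      = \sum_(i < m) a p q m.+1 (bump 0 (bump 0 i)).
    move=> c hc; apply: eq_bigr => i _.
    rewrite /bump !leq0n !add1n.
    have -> : (c.+1 - i.+2 = 0)%N by lia.
    by rewrite expr0 mul1r.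
  rewrite (e 1%N) //.
  have -> : bump 0 0 = 1%N by [].
  have -> : (2 - 1 = 1)%N by [].
  rewrite subnn expr0 !expr1; ring.
rewrite (aS p q (m:=0) (i:=1)) // /S big_ord_recl big_ord0 a00.
by rewrite /= !expr1 addr0 mulr1 expr2 mulrA.
Qed.
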